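(* Let $m,n\ge1$ and let $\mathcal G=\mathcal G(A,\tau)$ be the Kac–Moody superalgebra described below. Then in $\mathcal G$: (1) $[e_{ij},e_{kl}]=\delta_{j-1,k}e_{il}$ for all $i\ge j$, $k\ge l$ in $\Omega$ with $(i,j)\ge(k,l)$ lexicographically and $k<m+n$; (2) $[e_{m+n,i},[e_{m+n,j},e_{m+n,k}]]=0$ for all $i,j,k\in\Omega$; (3) $[[e_{m+n,i},e_{m+n,j}],[e_{m+n,k},e_{m+n,l}]]=0$ for all $i,j,k,l\in\Omega$.
   Context: Let $k$ be a field with $\mathrm{char}(k)\ne2,3$. $\Omega=\{1,\dots,m+n\}$, $\tau=\{n\}$, and $A=(a_{ij})$ with $a_{ii}=2$ for $i\ne n$, $a_{nn}=0$, $a_{n,n+1}=1$, $a_{m+n,m+n-1}=-2$, $a_{ij}=-1$ if $|i-j|=1$ and $(i,j)\notin\{(n,n+1),(m+n,m+n-1)\}$, $a_{ij}=0$ if $|i-j|>1$. The Kac–Moody superalgebra $\mathcal G(A,\tau)$ is the Lie superalgebra generated by $e_i,h_i,f_i$ ($i\in\Omega$), with $e_n,f_n$ odd and all other generators even, subject to: $[h_i,h_j]=0$; $[e_i,f_j]=\delta_{ij}h_i$; $[e_j,h_i]=-a_{ij}e_j$; $[h_i,f_j]=-a_{ij}f_j$; $(\mathrm{ad}e_i)^{1-n_{ij}}e_j=0$ and $e_i(\widetilde{\mathrm{ad}}e_j)^{1-n_{ji}}=0$ for $i>j$; $[[e_{k+1},e_k],[e_k,e_{k-1}]]=0$ for $k\in\eta$;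 and the same relations with $f$'s in place of $e$'s. Here $(\mathrm{ad}x)^ny=[x,[x,\dots,[x,y]\dots]]$, $x(\widetilde{\mathrm{ad}}y)^n=[\dots[[x,y],y],\dots,y]$ ($n$ times), $n_{ij}=a_{ij}$ if $a_{ii}=2$ or $a_{ij}=0$, $n_{ij}=-1$ if $a_{ii}=0\ne a_{ij}$, and $\eta$ is the set of $k$ with $k\in\tau$, $k\pm1\notin\tau$ (and $k\pm1\in\Omega$), $a_{kk}=0$, $a_{k+1,k-1}=0$, $a_{k,k+1}+a_{k,k-1}=0$. Notation: for $i>j$, $e_{ij}=[e_i,[e_{i-1},[\dots,[e_{j+1},e_j]\dots]]]$, and $e_{ii}=e_i$. Lexicographic order on pairs: $(i,j)>(k,l)$ iff $i>k$, or $i=k$ and $j>l$. *)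

(* Defs.v *)
From mathcomp Require Import all_boot all_order all_algebra.
Set Implicit Arguments. Unset Strict Implicit. Unset Printing Implicit Defensive.
Import Order.TTheory GRing.Theory Num.Theory.
Local Open Scope ring_scope.

(* A Lie superalgebra is a k-vector space V with a Z/2-grading
   V = V_false (+) V_true (P b x : "x is homogeneous of parity b")
   and a bilinear bracket br satisfying graded super-antisymmetry and the
   super Jacobi identity. *)

Definition ssign (k : fieldType) (a b : bool) : k := if a && b then -1 else 1.

Definition is_lie_superalgebra (k : fieldType) (V : lmodType k)
    (br : V -> V -> V) (P : bool -> V -> Prop) : Prop :=
  [/\
      ((forall (c : k) (x y z : V), br (c *: x + y) z = c *: br x z + br y z)
       /\ (forall (c : k) (x y z : V), br z (c *: x + y) = c *: br z x + br z y)),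
      (forall b, P b 0 /\ (forall (c : k) (x y : V), P b x -> P b y -> P b (c *: x + y))),
      ((forall x, exists x0 x1, [/\ P false x0, P true x1 & x = x0 + x1])
        /\ (forall x, P false x -> P true x -> x = 0)),
      (forall a b x y, P a x -> P b y -> P (addb a b) (br x y)) &
      ((forall a b x y, P a x -> P b y -> br x y = - (ssign k a b *: br y x))
      /\ (forall a b x y z, P a x -> P b y ->
            br x (br y z) = br (br x y) z + ssign k a b *: br y (br x z)))].

Definition inOmega (m n i : nat) : bool := (1 <= i <= m + n)%N.

Definition tau (n i : nat) : bool := i == n.

Definition cartan (m n i j : nat) : int :=
  if i == j then (if i == n then 0 else 2)
  else if (i == n) && (j == n.+1) then 1
  else if (i == m + n) && (j == (m + n).-1) then -2
  else if (i == j.+1) || (j == i.+1) then -1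
  else 0.

Definition nij (m n i j : nat) : int :=
  if (cartan m n i i == 0) && (cartan m n i j != 0) then -1 else cartan m n i j.

Definition in_eta (m n kk : nat) : bool :=
  [&& tau n kk, ~~ tau n kk.+1, ~~ tau n kk.-1,
      inOmega m n kk.+1, (1 <= kk)%N && inOmega m n kk.-1,
      cartan m n kk kk == 0, cartan m n kk.+1 kk.-1 == 0 &
      cartan m n kk kk.+1 + cartan m n kk kk.-1 == 0].

Definition adl (V : Type) (br : V -> V -> V) (N : nat) (x y : V) : V :=
  iter N (br x) y.
Definition adr (V : Type) (br : V -> V -> V) (N : nat) (x y : V) : V :=
  iter N (fun z => br z y) x.

Definition km_relations (k : fieldType) (V : lmodType k) (br : V -> V -> V)
    (P : bool -> V -> Prop) (m n : nat) (e h f : nat -> V) : Prop :=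
  [/\
      (forall i, inOmega m n i ->
         [/\ P (i == n) (e i), P (i == n) (f i) & P false (h i)]),
      (forall i j, inOmega m n i -> inOmega m n j ->
         br (h i) (h j) = 0 /\ br (e i) (f j) = (if i == j then h i else 0)),
      (forall i j, inOmega m n i -> inOmega m n j ->
         br (e j) (h i) = - ((cartan m n i j)%:~R *: e j)
         /\ br (h i) (f j) = - ((cartan m n i j)%:~R *: f j)),
      (forall i j, inOmega m n i -> inOmega m n j -> (j < i)%N ->
         [/\ adl br `|1 - nij m n i j|%N (e i) (e j) = 0,
             adr br `|1 - nij m n j i|%N (e i) (e j) = 0,
             adl br `|1 - nij m n i j|%N (f i) (f j) = 0 &
             adr br `|1 - nij m n j i|%N (f i) (f j) = 0]) &
      (forall kk, inOmega m n kk -> in_eta m n kk ->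
         br (br (e kk.+1) (e kk)) (br (e kk) (e kk.-1)) = 0
         /\ br (br (f kk.+1) (f kk)) (br (f kk) (f kk.-1)) = 0)].

(* e_{ij} = [e_i,[e_{i-1},[...,[e_{j+1},e_j]...]]] for i >= j; e_{ii} = e_i.
   eseg br e j d = e_{j+d, j}. *)
Fixpoint eseg (V : Type) (br : V -> V -> V) (e : nat -> V) (j d : nat) : V :=
  match d with
  | 0 => e j
  | d'.+1 => br (e (j + d'.+1)%N) (eseg br e j d')
  end.

Definition eij (V : Type) (br : V -> V -> V) (e : nat -> V) (i j : nat) : V :=
  eseg br e j (i - j).

Definition lex_ge (i j k l : nat) : bool := (k < i)%N || ((i == k) && (l <= j)%N).

(* Main.v *)
Require Import Defs.
From mathcomp Require Import all_boot all_order all_algebra zify.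
Import Order.TTheory GRing.Theory Num.Theory.
Local Open Scope ring_scope.
Set Implicit Arguments. Unset Strict Implicit. Unset Printing Implicit Defensive.

Ltac cb := rewrite /cartan; repeat (case: ifP => //=; move=> ?); try lia.

Lemma cartan_far m n a b : (b.+1 < a)%N -> cartan m n a b = 0 /\ cartan m n b a = 0.
Proof. move=> H; split; cb. Qed.
Lemma cartan_adr m n t : (1 <= m)%N -> (2 <= t <= m + n)%N -> cartan m n t.-1 t = if t.-1 == n then 1 else -1.
Proof. move=> *; cb. Qed.
Lemma cartan_adl m n t : (1 <= m)%N -> (2 <= t <= m + n)%N -> cartan m n t t.-1 = if t == (m + n)%N then -2 else -1.
Proof. move=> *; cb. Qed.
Lemma cartan_diag m n a : cartan m n a a = if a == n then 0 else 2.
Proof. by rewrite /cartan eqxx. Qed.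

Lemma nij_far m n a b : (b.+1 < a)%N -> nij m n a b = 0 /\ nij m n b a = 0.
Proof. by move=> H; have [H1 H2] := cartan_far m n H; rewrite /nij H1 H2 eqxx !andbF. Qed.
Lemma nij_adr m n t : (1 <= m)%N -> (2 <= t <= m + n)%N -> nij m n t.-1 t = -1.
Proof. by move=> H1 H2; rewrite /nij cartan_adr // cartan_diag; case: (t.-1 == n). Qed.
Lemma nij_adl m n t : (1 <= m)%N -> (2 <= t <= m + n)%N -> t != n -> nij m n t t.-1 = if t == (m + n)%N then -2 else -1.
Proof. by move=> H1 H2 /negPf Ht; rewrite /nij cartan_adl // cartan_diag Ht; case: (t == (m+n)%N). Qed.
Lemma cartan_n1 m n : (1 <= n)%N -> (1 <= m)%N -> cartan m n n.+1 n = -1 \/ cartan m n n.+1 n = -2.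
Proof. move=> *; rewrite /cartan; repeat (case: ifP => //=; move=> ?); try lia; auto. Qed.
Lemma eta_n m n : (1 <= m)%N -> (2 <= n)%N -> in_eta m n n.
Proof.
move=> *; rewrite /in_eta /tau /inOmega.
rewrite (cartan_diag m n n) eqxx /=.
have -> : cartan m n n.+1 n.-1 = 0 by cb.
have -> : cartan m n n n.+1 = 1 by cb.
have -> : cartan m n n n.-1 = -1 by cb.
apply/and5P; split; try lia.
Qed.

Section Pf.
Variables (k : fieldType) (V : lmodType k) (br : V -> V -> V) (P : bool -> V -> Prop).
Variables (m n : nat) (e h f : nat -> V).
Hypothesis H2 : (2%:R : k) != 0.
Hypothesis H3 : (3%:R : k) != 0.
Hypothesis Hm : (1 <= m)%N.
Hypothesis Hn : (1 <= n)%N.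
Hypothesis HL : is_lie_superalgebra br P.
Hypothesis HK : km_relations br P m n e h f.

Definition sgn (b : bool) : k := if b then -1 else 1.

Lemma sgnZZ b c (v : V) : sgn b *: (sgn c *: v) = sgn (b (+) c) *: v.
Proof. by rewrite scalerA; case: b; case: c; rewrite /= ?mulrNN ?mulr1 ?mulN1r ?mul1r. Qed.
Lemma sgnN b (v : V) : - (sgn b *: v) = sgn (~~ b) *: v.
Proof. by case: b; rewrite /= ?scaleN1r ?scale1r ?opprK. Qed.
Lemma sgn_eq0 b (v : V) : sgn b *: v = 0 -> v = 0.
Proof. by case: b; rewrite /= ?scaleN1r ?scale1r // => /eqP; rewrite oppr_eq0 => /eqP. Qed.
Lemma sgn0 b : sgn b *: (0 : V) = 0.
Proof. by rewrite scaler0. Qed.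

Lemma brDl_ c x y z : br (c *: x + y) z = c *: br x z + br y z.
Proof. by case: HL => [[H _] _ _ _ _]. Qed.
Lemma brDr_ c x y z : br z (c *: x + y) = c *: br z x + br z y.
Proof. by case: HL => [[_ H] _ _ _ _]. Qed.
Lemma br0l z : br 0 z = 0.
Proof.
have := brDl_ 1 0 0 z; rewrite !scale1r addr0 => H.
by apply: (addrI (br 0 z)); rewrite addr0 -H.
Qed.
Lemma br0r z : br z 0 = 0.
Proof.
have := brDr_ 1 0 0 z; rewrite !scale1r addr0 => H.
by apply: (addrI (br z 0)); rewrite addr0 -H.
Qed.
Lemma brZl c x z : br (c *: x) z = c *: br x z.
Proof. by have := brDl_ c x 0 z; rewrite addr0 br0l addr0. Qed.
Lemma brZr c x z : br z (c *: x) = c *: br z x.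
Proof. by have := brDr_ c x 0 z; rewrite addr0 br0r addr0. Qed.
Lemma brDl x y z : br (x + y) z = br x z + br y z.
Proof. by have := brDl_ 1 x y z; rewrite !scale1r. Qed.
Lemma brDr x y z : br z (x + y) = br z x + br z y.
Proof. by have := brDr_ 1 x y z; rewrite !scale1r. Qed.
Lemma brNl x z : br (- x) z = - br x z.
Proof. by rewrite -scaleN1r brZl scaleN1r. Qed.
Lemma brNr x z : br z (- x) = - br z x.
Proof. by rewrite -scaleN1r brZr scaleN1r. Qed.

Lemma Pbr a b x y : P a x -> P b y -> P (addb a b) (br x y).
Proof. by case: HL => _ _ _ H _; apply: H. Qed.
Lemma antisym a b x y : P a x -> P b y -> br x y = sgn (~~ (a && b)) *: br y x.
Proof. by case: HL => _ _ _ _ [H _] Px Py; rewrite (H _ _ _ _ Px Py) sgnN. Qed.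
Lemma jacobi a b x y z : P a x -> P b y ->
  br x (br y z) = br (br x y) z + sgn (a && b) *: br y (br x z).
Proof. by case: HL => _ _ _ _ [_ H] Px Py; rewrite (H _ _ _ _ _ Px Py). Qed.

Lemma antisym0 a b x y : P a x -> P b y -> br y x = 0 -> br x y = 0.
Proof. by move=> Px Py; rewrite (antisym Px Py) => ->; rewrite scaler0. Qed.
Lemma J0 a b x y z : P a x -> P b y -> br x z = 0 -> br x (br y z) = br (br x y) z.
Proof. by move=> Px Py H; rewrite (jacobi _ Px Py) H br0r scaler0 addr0. Qed.
Lemma comm_l a b x y z : P a x -> P b y -> br x z = 0 -> br y z = 0 -> br (br x y) z = 0.
Proof.
move=> Px Py H1 H2'; have := jacobi z Px Py.
by rewrite H2' H1 !br0r scaler0 addr0 => <-.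
Qed.
Lemma comm_r a c x y z : P c z -> P a x -> br z x = 0 -> br z y = 0 -> br z (br x y) = 0.
Proof.
move=> Pz Px H1 H2'; rewrite (jacobi _ Pz Px) H1 H2' br0l br0r scaler0 addr0 //.
Qed.

Lemma rjac a b c x y z : P a x -> P b y -> P c z ->
  exists s, br (br x y) z = br x (br y z) + sgn s *: br (br x z) y.
Proof.
move=> Px Py Pz.
have Pxz := Pbr Px Pz.
have E1 := jacobi z Px Py.
rewrite (antisym Py Pxz) sgnZZ in E1.
exists (~~ ((a && b) (+) ~~ (b && (a (+) c)))).
by rewrite E1 -sgnN addrK.
Qed.
Lemma rJ0 a b c x y z : P a x -> P b y -> P c z -> br x z = 0 ->
  br (br x y) z = br x (br y z).
Proof. by move=> Px Py Pz H; have [s ->] := rjac Px Py Pz; rewrite H br0l scaler0 addr0. Qed.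

Lemma two2 s1 s2 (U W : V) : sgn s1 *: U + sgn s2 *: W = 0 -> U = sgn (~~ (s1 (+) s2)) *: W.
Proof.
move/eqP; rewrite addr_eq0 => /eqP H.
have := congr1 (fun v => sgn s1 *: v) H.
rewrite sgnZZ addbb /= scale1r sgnN sgnZZ => ->; by congr (sgn _ *: _); case: (s1); case: (s2).
Qed.
Lemma two1 s2 (U W : V) : U + sgn s2 *: W = 0 -> U = sgn (~~ s2) *: W.
Proof. by move=> H; apply: (@two2 false); rewrite /= scale1r. Qed.

Lemma sum3 b1 b2 b3 (v : V) : (sgn b1 + sgn b2 + sgn b3) *: v = 0 -> v = 0.
Proof.
move/eqP; rewrite scaler_eq0 => /orP [|/eqP //].
have h3 : (1 + 1 + 1 : k) != 0 by have := H3; rewrite !mulrSr mulr0n add0r.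
case: b1; case: b2; case: b3; rewrite /=.
- by rewrite -!opprD oppr_eq0 (negPf h3).
- by rewrite addrNK oppr_eq0 oner_eq0.
- by rewrite addNr add0r oppr_eq0 oner_eq0.
- by rewrite addNr add0r oner_eq0.
- by rewrite subrr add0r oppr_eq0 oner_eq0.
- by rewrite subrr add0r oner_eq0.
- by rewrite addrK oner_eq0.
- by rewrite (negPf h3).
Qed.

Lemma selfbr_even x : P false x -> br x x = 0.
Proof.
move=> Px; have H : br x x = - br x x by rewrite {1}(antisym Px Px) /= scaleN1r.
have : (2%:R : k) *: br x x = 0.
  by rewrite !mulrSr mulr0n add0r scalerDl scale1r {1}H addNr.
by move/eqP; rewrite scaler_eq0 (negPf H2) => /eqP.
Qed.

Lemma oddsq x z : P true x -> br x x = 0 -> br x (br x z) = 0.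
Proof.
move=> Px H; have := jacobi z Px Px; rewrite H br0l add0r /= scaleN1r => E.
have : (2%:R : k) *: br x (br x z) = 0.
  by rewrite !mulrSr mulr0n add0r scalerDl scale1r {1}E addNr.
by move/eqP; rewrite scaler_eq0 (negPf H2) => /eqP.
Qed.


Lemma negself (v : V) : v = - v -> v = 0.
Proof.
move=> H; have : (2%:R : k) *: v = 0.
  by rewrite !mulrSr mulr0n add0r scalerDl scale1r {2}H subrr.
by move/eqP; rewrite scaler_eq0 (negPf H2) => /eqP.
Qed.

Lemma solB a1 a2 a4 (B : V) : sgn a1 *: B = sgn a2 *: B + sgn a4 *: B -> B = 0.
Proof.
move=> H; apply: (@sum3 a1 (~~ a2) (~~ a4)).
by rewrite !scalerDl -!sgnN H (addrC (sgn a2 *: B)) addrK subrr.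
Qed.

Lemma sgn_flip b (U W : V) : U = sgn b *: W -> W = sgn b *: U.
Proof. by move=> ->; rewrite sgnZZ addbb scale1r. Qed.

Local Notation N := (m + n)%N.
Local Notation inO i := (1 <= i <= m + n)%N.
Local Notation E i j := (eij br e i j).

Lemma Pe i : inO i -> P (i == n) (e i).
Proof. by case: HK => H _ _ _ _ Hi; case: (H _ Hi). Qed.
Lemma Pf i : inO i -> P (i == n) (f i).
Proof. by case: HK => H _ _ _ _ Hi; case: (H _ Hi). Qed.
Lemma Ph i : inO i -> P false (h i).
Proof. by case: HK => H _ _ _ _ Hi; case: (H _ Hi). Qed.
Lemma ef i j : inO i -> inO j -> br (e i) (f j) = if i == j then h i else 0.
Proof. by case: HK => _ H _ _ _ Hi Hj; case: (H _ _ Hi Hj). Qed.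
Lemma eh i j : inO i -> inO j -> br (e j) (h i) = - ((cartan m n i j)%:~R *: e j).
Proof. by case: HK => _ _ H _ _ Hi Hj; case: (H _ _ Hi Hj). Qed.
Lemma serre i j : inO i -> inO j -> (j < i)%N ->
  adl br `|1 - nij m n i j|%N (e i) (e j) = 0 /\ adr br `|1 - nij m n j i|%N (e i) (e j) = 0.
Proof. by case: HK => _ _ _ H _ Hi Hj Hji; case: (H _ _ Hi Hj Hji). Qed.

Lemma PeN : P false (e N).
Proof.
have H : inO N by lia.
by have := Pe H; rewrite (_ : (N == n) = false) //; lia.
Qed.

Lemma far a b : inO a -> inO b -> (b.+1 < a)%N -> br (e a) (e b) = 0 /\ br (e b) (e a) = 0.
Proof.
move=> Ha Hb H.
have Hlt : (b < a)%N by lia.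
have [A _] := serre Ha Hb Hlt.
have [N1 _] := nij_far m n H.
rewrite N1 in A.
have A' : br (e a) (e b) = 0 by exact A.
split=> //; exact: (antisym0 (Pe Hb) (Pe Ha) A').
Qed.

Lemma farE a b : inO a -> inO b -> ((b.+1 < a) || (a.+1 < b))%N -> br (e a) (e b) = 0.
Proof. by move=> Ha Hb /orP [H|H]; [exact: (far Ha Hb H).1 | exact: (far Hb Ha H).2]. Qed.

Lemma serre_adr t : (2 <= t <= N)%N -> br (br (e t) (e t.-1)) (e t.-1) = 0.
Proof.
move=> Ht.
have Hi : inO t by lia.
have Hj : inO t.-1 by lia.
have Hlt : (t.-1 < t)%N by lia.
have [_ A] := serre Hi Hj Hlt.
rewrite (nij_adr Hm Ht) in A; exact A.
Qed.

Lemma serre_adl2 t : (2 <= t < N)%N -> t != n -> br (e t) (br (e t) (e t.-1)) = 0.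
Proof.
move=> Ht Htn.
have Hi : inO t by lia.
have Hj : inO t.-1 by lia.
have Hlt : (t.-1 < t)%N by lia.
have [A _] := serre Hi Hj Hlt.
have Ht' : (2 <= t <= N)%N by lia.
rewrite (nij_adl Hm Ht' Htn) in A.
have E0 : (t == N) = false by apply/negbTE; lia.
rewrite E0 in A; exact A.
Qed.

Lemma serre_adl3 : br (e N) (br (e N) (br (e N) (e N.-1))) = 0.
Proof.
have Hi : inO N by lia.
have Hj : inO N.-1 by lia.
have Hlt : (N.-1 < N)%N by lia.
have [A _] := serre Hi Hj Hlt.
have Ht' : (2 <= N <= N)%N by lia.
have Htn : N != n by lia.
rewrite (nij_adl Hm Ht' Htn) eqxx in A; exact A.
Qed.

Lemma eta_rel : (2 <= n)%N -> br (br (e n.+1) (e n)) (br (e n) (e n.-1)) = 0.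
Proof.
move=> H2n; case: HK => _ _ _ _ H.
have Hn0 : inOmega m n n by rewrite /inOmega; lia.
exact: (H n Hn0 (eta_n Hm H2n)).1.
Qed.

Lemma ee_nn : br (e n) (e n) = 0.
Proof.
have Hn0 : inO n by lia.
have Hn1 : inO n.+1 by lia.
have Ht : (2 <= n.+1 <= N)%N by lia.
have R : br (br (e n.+1) (e n)) (e n) = 0 by exact: (serre_adr Ht).
have Pa : P false (e n.+1) by have := Pe Hn1; rewrite (_ : (n.+1 == n) = false) //; lia.
have Pb : P true (e n) by have := Pe Hn0; rewrite eqxx.
have PF : P false (f n.+1) by have := Pf Hn1; rewrite (_ : (n.+1 == n) = false) //; lia.
have Fb : br (f n.+1) (e n) = 0.
  apply: (antisym0 PF Pb); rewrite ef // (_ : (n == n.+1) = false) //; lia.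
have Fa : br (f n.+1) (e n.+1) = - h n.+1.
  by rewrite (antisym PF Pa) ef // eqxx /= scaleN1r.
have Hb : br (h n.+1) (e n) = (cartan m n n.+1 n)%:~R *: e n.
  by rewrite (antisym (Ph Hn1) Pb) eh //= scaleN1r opprK.
have S1 : br (f n.+1) (br (e n.+1) (e n)) = - ((cartan m n n.+1 n)%:~R *: e n).
  by rewrite (jacobi _ PF Pa) Fb br0r scaler0 addr0 Fa brNl Hb.
have Hc : ((cartan m n n.+1 n)%:~R : k) != 0.
  by case: (cartan_n1 Hn Hm) => ->; rewrite intrN oppr_eq0 // oner_eq0.
have := congr1 (br (f n.+1)) R.
rewrite br0r (jacobi _ PF (Pbr Pa Pb)) S1 Fb br0r scaler0 addr0 brNl brZl => /eqP.
by rewrite oppr_eq0 scaler_eq0 (negPf Hc) => /eqP.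
Qed.

Lemma E_ii i : E i i = e i.
Proof. by rewrite /eij subnn. Qed.

Lemma E_rec i j : (j < i)%N -> E i j = br (e i) (E i.-1 j).
Proof.
move=> H; rewrite /eij.
have -> : (i - j = (i.-1 - j).+1)%N by lia.
rewrite /=.
have -> : (j + (i.-1 - j).+1 = i)%N by lia.
done.
Qed.

Lemma PE i j : (1 <= j)%N -> (j <= i)%N -> (i <= N)%N -> P ((j <= n) && (n <= i))%N (E i j).
Proof.
elim: i => [|i IH] Hj Hji HiN; first lia.
have [Hij|Hij] := eqVneq j i.+1.
  rewrite Hij E_ii.
  have -> : ((i.+1 <= n) && (n <= i.+1))%N = (i.+1 == n) by lia.
  apply: Pe; lia.
rewrite E_rec; last lia.
have -> : ((j <= n) && (n <= i.+1))%N = addb (i.+1 == n) ((j <= n) && (n <= i))%N by lia.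
apply: Pbr; [apply: Pe; lia | apply: IH; lia].
Qed.

Lemma comm_Er c Z i j : P c Z -> (1 <= j)%N -> (j <= i)%N -> (i <= N)%N ->
  (forall a, (j <= a <= i)%N -> br Z (e a) = 0) -> br Z (E i j) = 0.
Proof.
move=> PZ; elim: i => [|i IH] Hj Hji HiN Ha; first lia.
have [Hij|Hij] := eqVneq j i.+1.
  by rewrite Hij E_ii; apply: Ha; lia.
rewrite E_rec; last lia.
have Hi1 : inO i.+1 by lia.
apply: (comm_r PZ (Pe Hi1)); first by apply: Ha; lia.
apply: IH; try lia.
by move=> a Ha'; apply: Ha; lia.
Qed.

Lemma comm_El Z i j : (1 <= j)%N -> (j <= i)%N -> (i <= N)%N ->
  (forall a, (j <= a <= i)%N -> br (e a) Z = 0) -> br (E i j) Z = 0.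
Proof.
elim: i => [|i IH] Hj Hji HiN Ha; first lia.
have [Hij|Hij] := eqVneq j i.+1.
  by rewrite Hij E_ii; apply: Ha; lia.
rewrite E_rec; last lia.
have Hi1 : inO i.+1 by lia.
have [? PY] : exists b, P b (E i j) by eexists; apply: PE; lia.
apply: (comm_l (Pe Hi1) PY); first by apply: Ha; lia.
apply: IH; try lia.
by move=> a Ha'; apply: Ha; lia.
Qed.

Lemma LA a i j : inO a -> (1 <= j)%N -> (j <= i)%N -> (i <= N)%N -> ((i.+1 < a) || (a.+1 < j))%N ->
  br (e a) (E i j) = 0 /\ br (E i j) (e a) = 0.
Proof.
move=> Ha Hj Hji HiN H; split.
  apply: (comm_Er (Pe Ha)) => // b Hb; apply: farE => //; lia.
apply: comm_El => // b Hb; apply: farE => //; lia.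
Qed.

Lemma L3 i j kk l : (1 <= l)%N -> (l <= kk)%N -> (kk.+2 <= j)%N -> (j <= i)%N -> (i <= N)%N ->
  br (E i j) (E kk l) = 0.
Proof.
move=> Hl Hlk Hkj Hji HiN; apply: comm_El; try lia.
move=> a Ha; have Ha' : inO a by lia.
apply: (LA Ha' Hl Hlk _ _).1; lia.
Qed.

Lemma LB i j l : (1 <= l)%N -> (l < j)%N -> (j <= i)%N -> (i <= N)%N ->
  br (E i j) (E j.-1 l) = E i l.
Proof.
move=> Hl Hlj; elim: i => [|i IH] Hji HiN; first lia.
have [Hij|Hij] := eqVneq j i.+1.
  rewrite Hij E_ii /= [in RHS]E_rec //; lia.
have Hi1 : inO i.+1 by lia.
rewrite [E i.+1 j]E_rec; last lia.
rewrite /=.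
have [? P1] : exists b, P b (E i j) by eexists; apply: PE; lia.
have [? P2] : exists b, P b (E j.-1 l) by eexists; apply: PE; lia.
have Z0 : br (e i.+1) (E j.-1 l) = 0.
  by apply: (LA Hi1 _ _ _ _).1; lia.
rewrite (rJ0 (Pe Hi1) P1 P2 Z0) IH; try lia.
by rewrite [in RHS]E_rec //; lia.
Qed.

Lemma G t j : (1 <= j)%N -> (j <= t)%N -> (t < N)%N -> br (e t) (E t j) = 0.
Proof.
move=> Hj Hjt HtN.
have Ht : inO t by lia.
have [Htn|Htn] := eqVneq t n.
  have Pt : P true (e t) by have := Pe Ht; rewrite Htn eqxx.
  have [Hjt'|Hjt'] := eqVneq j t.
    by rewrite Hjt' E_ii Htn ee_nn.
  rewrite E_rec; last lia.
  by apply: oddsq => //; rewrite Htn ee_nn.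
have Pt : P false (e t) by have := Pe Ht; rewrite (negPf Htn).
have [Hjt'|Hjt'] := eqVneq j t.
  by rewrite Hjt' E_ii; apply: selfbr_even.
rewrite E_rec; last lia.
have [Hj1|Hj1] := eqVneq j t.-1.
  by rewrite Hj1 E_ii; apply: serre_adl2 => //; lia.
rewrite [E t.-1 j]E_rec; last lia.
have Ht1 : inO t.-1 by lia.
have Z0 : br (e t) (E t.-1.-1 j) = 0.
  by apply: (LA Ht _ _ _ _).1; lia.
rewrite (J0 Pt (Pe Ht1) Z0).
have Ht2 : (2 <= t < N)%N by lia.
rewrite (jacobi _ Pt (Pbr Pt (Pe Ht1))) (serre_adl2 Ht2 Htn) br0l add0r Z0 br0r.
by rewrite scaler0.
Qed.

Lemma F_odd : (2 <= n)%N -> br (E n.+1 n.-1) (e n) = 0.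
Proof.
move=> H2n.
have Hn0 : inO n by lia.
have Hn1 : inO n.+1 by lia.
have Hnm : inO n.-1 by lia.
rewrite E_rec; last lia.
rewrite /= E_rec; last lia.
rewrite E_ii.
have Pb := Pbr (Pe Hn0) (Pe Hnm).
have [s ->] := rjac (Pe Hn1) Pb (Pe Hn0).
rewrite eta_rel // scaler0 addr0.
have -> : br (br (e n) (e n.-1)) (e n) = 0.
  apply: (antisym0 Pb (Pe Hn0)); apply: oddsq; last exact: ee_nn.
  by have := Pe Hn0; rewrite eqxx.
by rewrite br0r.
Qed.

Lemma F t : (t <= N)%N -> forall j a, (1 <= j)%N -> (j <= a)%N -> (a < t)%N -> br (E t j) (e a) = 0.
Proof.
elim: t => [|t IH] HtN j a Hj Hja Hat; first lia.
have Ht1 : inO t.+1 by lia.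
have Ha : inO a by lia.
have [Hat'|Hat'] := ltnP a t.
  rewrite E_rec; last lia.
  rewrite /=.
  have [? PEt] : exists b, P b (E t j) by eexists; apply: PE; lia.
  apply: (comm_l (Pe Ht1) PEt).
  - by apply: farE => //; lia.
  - by apply: IH => //; lia.
have -> : a = t by lia.
have Ht : inO t by lia.
have [Hjt|Hjt] := eqVneq j t.
  rewrite Hjt E_rec // E_ii.
  have Ht2 : (2 <= t.+1 <= N)%N by lia.
  exact: (serre_adr Ht2).
have [Htn|Htn] := eqVneq t n.
  rewrite Htn.
  have H2n : (2 <= n)%N by lia.
  have [Hj1|Hj1] := eqVneq j n.-1.
    by rewrite Hj1; apply: F_odd.
  have LB' : br (E n.+1 n.-1) (E n.-2 j) = E n.+1 j.
    by apply: LB; lia.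
  rewrite -LB'.
  have [? PA] : exists b, P b (E n.+1 n.-1) by eexists; apply: PE; lia.
  have [? PZ] : exists b, P b (E n.-2 j) by eexists; apply: PE; lia.
  apply: (comm_l PA PZ (F_odd H2n)).
  have Hn0 : inO n by lia.
  by apply: (LA Hn0 _ _ _ _).2; lia.
have Pt : P false (e t) by have := Pe Ht; rewrite (negPf Htn).
have [? Pt1] : exists b, P b (e t.+1) by eexists; apply: Pe.
have [? PZ] : exists b, P b (E t.-1 j) by eexists; apply: PE; lia.
have [? PW] : exists b, P b (E t j) by eexists; apply: PE; lia.
have [? PW1] : exists b, P b (E t.+1 j) by eexists; apply: PE; lia.
have Et : E t j = br (e t) (E t.-1 j) by rewrite E_rec //; lia.
have Et1 : E t.+1 j = br (e t.+1) (E t j) by rewrite E_rec //; lia.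
have Pu := Pbr Pt1 Pt.
have Z0 : br (e t.+1) (E t.-1 j) = 0 by apply: (LA Ht1 _ _ _ _).1; lia.
have SA : E t.+1 j = br (br (e t.+1) (e t)) (E t.-1 j) by rewrite Et1 Et (J0 Pt1 Pt Z0).
have Ht2 : (2 <= t.+1 <= N)%N by lia.
have U0 : br (br (e t.+1) (e t)) (e t) = 0 by exact: (serre_adr Ht2).
have SC : br (E t.-1 j) (e t) = - E t j by rewrite (antisym PZ Pt) andbF /= scaleN1r Et.
have SB : br (E t.+1 j) (e t) = - br (br (e t.+1) (e t)) (E t j).
  by rewrite {1}SA (rJ0 Pu PZ Pt U0) SC brNr.
have G0 : br (e t) (E t j) = 0 by apply: G; lia.
have SD : br (br (e t.+1) (e t)) (E t j) = br (E t.+1 j) (e t).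
  have := jacobi (E t j) Pt1 Pt; rewrite G0 br0r andbF /= scale1r -Et1 => /esym /eqP.
  rewrite addr_eq0 => /eqP ->.
  by rewrite (antisym Pt PW1) /= scaleN1r opprK.
by apply: negself; rewrite {1}SB SD.
Qed.

Lemma L40 i j kk : (1 <= j)%N -> (j <= kk)%N -> (kk <= i)%N -> (kk < N)%N -> (i <= N)%N ->
  br (E i j) (e kk) = 0.
Proof.
move=> Hj Hjk Hki HkN HiN; have [H|H] := ltnP kk i.
  by apply: (F HiN); lia.
have -> : i = kk by lia.
have Hk : inO kk by lia.
have [? PX] : exists b, P b (E kk j) by eexists; apply: PE; lia.
apply: (antisym0 PX (Pe Hk)); apply: G; lia.
Qed.

Lemma L4 kk : (kk < N)%N -> forall i j l, (1 <= j)%N -> (j <= kk)%N -> (kk <= i)%N -> (i <= N)%N ->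
  (1 <= l)%N -> (l <= kk)%N -> br (E i j) (E kk l) = 0.
Proof.
elim: kk => [|kk IH] HkN i j l Hj Hjk Hki HiN Hl Hlk; first lia.
have [Hlk'|Hlk'] := eqVneq l kk.+1.
  by rewrite Hlk' E_ii; apply: L40.
rewrite [E kk.+1 l]E_rec; last lia.
rewrite /=.
have [? PZ] : exists b, P b (E i j) by eexists; apply: PE; lia.
have Hk1 : inO kk.+1 by lia.
rewrite (jacobi _ PZ (Pe Hk1)) L40 // br0l add0r.
have [Hjk'|Hjk'] := eqVneq j kk.+1.
  have LB' : br (E i kk.+1) (E kk l) = E i l by apply: (LB (j := kk.+1)); lia.
  rewrite Hjk' LB'.
  have [Hki'|Hki'] := ltnP kk.+1 i.
    have [? PX] : exists b, P b (E i l) by eexists; apply: PE; lia.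
    rewrite (antisym0 (Pe Hk1) PX) ?scaler0 //.
    by apply: (F HiN); lia.
  have -> : i = kk.+1 by lia.
  by rewrite G ?scaler0 //; lia.
by rewrite IH ?br0r ?scaler0 //; lia.
Qed.

Lemma part1 i j kk l : inO i -> inO j -> inO kk -> inO l -> (j <= i)%N -> (l <= kk)%N ->
  lex_ge i j kk l -> (kk < N)%N ->
  br (E i j) (E kk l) = (if j.-1 == kk then E i l else 0).
Proof.
move=> Hi Hj Hk Hl Hji Hlk Hlex HkN.
have Hki : (kk <= i)%N by move: Hlex; rewrite /lex_ge; lia.
case: eqP => [Hjk|Hjk].
  by rewrite -Hjk; apply: LB; lia.
have [H|H] := ltnP kk.+1 j.
  by apply: L3; lia.
by apply: (L4 HkN); lia.
Qed.

Local Notation x i := (E N i).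
Local Notation T i j k := (br (x i) (br (x j) (x k))).

Lemma Px i : inO i -> P (i <= n)%N (x i).
Proof.
move=> Hi.
have E0 : ((i <= n) && (n <= N))%N = (i <= n)%N by lia.
by rewrite -E0; apply: PE; lia.
Qed.

Lemma Dx_up a : (1 <= a)%N -> (a < N)%N -> br (x a.+1) (e a) = x a.
Proof.
move=> Ha HaN.
have H := @LB N a.+1 a Ha (ltnSn a) HaN (leqnn N).
by rewrite /= E_ii in H.
Qed.

Lemma Dx_0 a i : (1 <= a)%N -> (a < N)%N -> inO i -> i != a.+1 -> br (x i) (e a) = 0.
Proof.
move=> Ha HaN Hi Hia.
have [H|H] := ltnP a.+1 i.
  by rewrite -E_ii; apply: L3; lia.
by apply: (F (leqnn N)); lia.
Qed.

Lemma texp a b c d X Y Z W : P a X -> P b Y -> P c Z -> P d W ->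
  exists s1 s2, br (br X (br Y Z)) W = br X (br Y (br Z W)) + sgn s1 *: br X (br (br Y W) Z)
     + sgn s2 *: br (br X W) (br Y Z).
Proof.
move=> PX PY PZ PW.
have [s2 ->] := rjac PX (Pbr PY PZ) PW.
have [s1 ->] := rjac PY PZ PW.
by exists s1, s2; rewrite brDr brZr.
Qed.

Lemma red1 i j kk : (1 <= i)%N -> (i < N)%N -> inO j -> inO kk -> j != i.+1 -> kk != i.+1 ->
  T i.+1 j kk = 0 -> T i j kk = 0.
Proof.
move=> Hi HiN Hj Hk Hji Hki HT.
have Hi1 : inO i.+1 by lia.
have Hi' : inO i by lia.
have [s1 [s2 H]] := texp (Px Hi1) (Px Hj) (Px Hk) (Pe Hi').
move: H; rewrite HT br0l (Dx_0 Hi HiN Hk Hki) (Dx_0 Hi HiN Hj Hji) (Dx_up Hi HiN).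
rewrite ?(br0r, br0l, scaler0, add0r, addr0).
by move/esym/sgn_eq0.
Qed.

Lemma red2 i j kk : (1 <= j)%N -> (j < N)%N -> inO i -> inO kk -> i != j.+1 -> kk != j.+1 ->
  T i j.+1 kk = 0 -> T i j kk = 0.
Proof.
move=> Hj HjN Hi Hk Hij Hkj HT.
have Hj1 : inO j.+1 by lia.
have Hj' : inO j by lia.
have [s1 [s2 H]] := texp (Px Hi) (Px Hj1) (Px Hk) (Pe Hj').
move: H; rewrite HT br0l (Dx_0 Hj HjN Hk Hkj) (Dx_0 Hj HjN Hi Hij) (Dx_up Hj HjN).
rewrite ?(br0r, br0l, scaler0, add0r, addr0).
by move/esym/sgn_eq0.
Qed.

Lemma red3 i j kk : (1 <= kk)%N -> (kk < N)%N -> inO i -> inO j -> i != kk.+1 -> j != kk.+1 ->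
  T i j kk.+1 = 0 -> T i j kk = 0.
Proof.
move=> Hk HkN Hi Hj Hik Hjk HT.
have Hk1 : inO kk.+1 by lia.
have Hk' : inO kk by lia.
have [s1 [s2 H]] := texp (Px Hi) (Px Hj) (Px Hk1) (Pe Hk').
move: H; rewrite HT br0l (Dx_0 Hk HkN Hj Hjk) (Dx_0 Hk HkN Hi Hik) (Dx_up Hk HkN).
rewrite ?(br0r, br0l, scaler0, add0r, addr0).
by move/esym.
Qed.

Lemma solB0 a2 a4 (B : V) : B = sgn a2 *: B + sgn a4 *: B -> B = 0.
Proof. by move=> H; apply: (@solB false a2 a4); rewrite /= scale1r. Qed.

Lemma Lbeta p : p.+2 = N ->
  [/\ T p.+2 p.+2 p.+2 = 0, T p.+2 p.+2 p.+1 = 0, T p.+2 p.+1 p.+2 = 0 & T p.+1 p.+2 p.+2 = 0].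
Proof.
move=> Np.
have xr : x p.+2 = e N by rewrite Np E_ii.
have xq : x p.+1 = br (e N) (e p.+1).
  rewrite E_rec; last lia.
  by rewrite (_ : N.-1 = p.+1) ?E_ii //; lia.
have eNN : br (e N) (e N) = 0 by apply: selfbr_even; exact: PeN.
have S3 : br (e N) (br (e N) (br (e N) (e p.+1))) = 0.
  by have := serre_adl3; rewrite (_ : N.-1 = p.+1) //; lia.
have Hq : inO p.+1 by lia.
split.
- by rewrite xr eNN br0r.
- by rewrite xr xq.
- by rewrite xr (antisym (Px Hq) PeN) brZr -xr xq xr S3 scaler0.
- by rewrite xr eNN br0r.
Qed.

Lemma Lgamma p : p.+2 = N ->
  [/\ T p.+1 p.+1 p.+2 = 0, T p.+1 p.+2 p.+1 = 0 & T p.+2 p.+1 p.+1 = 0].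
Proof.
move=> Np.
have [_ Hb2 Hb3 _] := Lbeta Np.
have Hq : inO p.+1 by lia.
have Hr : inO p.+2 by lia.
have Hq1 : (1 <= p.+1)%N by lia.
have HqN : (p.+1 < N)%N by lia.
have Xq := Px Hq. have Xr := Px Hr.
have Dq : br (x p.+2) (e p.+1) = x p.+1 := Dx_up Hq1 HqN.
have D0 : br (x p.+1) (e p.+1) = 0 by apply: Dx_0 => //; lia.
have Peq := Pe Hq.
have [s1 [s2 R1]] := texp Xr Xq Xr Peq.
move: R1; rewrite Hb3 br0l Dq D0 ?(br0r, br0l, scaler0, add0r, addr0) => /esym /two1 R1.
have [t1 [t2 R2]] := texp Xr Xr Xq Peq.
move: R2; rewrite Hb2 br0l Dq D0 ?(br0r, br0l, scaler0, add0r, addr0) => /esym /two2 R2.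
have [Hqn|Hqn] := eqVneq p.+1 n.
  have Xq' : P true (x p.+1) by have := Xq; rewrite (_ : (p.+1 <= n)%N = true) //; lia.
  have J := jacobi (x p.+2) Xq' Xq'.
  rewrite (antisym (Pbr Xq' Xq') Xr) R1 sgnZZ in J.
  have A0 := solB0 J.
  have C0 : T p.+2 p.+1 p.+1 = 0 by rewrite R1 A0 scaler0.
  split=> //.
  by move: C0; rewrite R2 => /sgn_eq0.
have Xq' : P false (x p.+1) by have := Xq; rewrite (_ : (p.+1 <= n)%N = false) //; lia.
have C0 : T p.+2 p.+1 p.+1 = 0 by rewrite selfbr_even // br0r.
split=> //.
- by move: C0; rewrite R1 => /sgn_eq0.
- by move: C0; rewrite R2 => /sgn_eq0.
Qed.

Lemma Ldelta p : (1 <= p)%N -> p.+2 = N ->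
  T p p.+1 p.+2 = 0 /\ T p p.+2 p.+1 = 0 /\ T p.+1 p p.+2 = 0 /\ T p.+1 p.+2 p = 0 /\
      T p.+2 p p.+1 = 0 /\ T p.+2 p.+1 p = 0.
Proof.
move=> Hp Np.
have [_ _ Hb3 Hb4] := Lbeta Np.
have [Hg1 Hg2 Hg3] := Lgamma Np.
have Hp' : inO p by lia.
have Hq : inO p.+1 by lia.
have Hr : inO p.+2 by lia.
have HpN : (p < N)%N by lia.
have Hq1 : (1 <= p.+1)%N by lia.
have HqN : (p.+1 < N)%N by lia.
have Xp := Px Hp'. have Xq := Px Hq. have Xr := Px Hr.
have Dpq : br (x p.+1) (e p) = x p := Dx_up Hp HpN.
have Dpr : br (x p.+2) (e p) = 0 by apply: Dx_0 => //; lia.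
have Dpp : br (x p) (e p) = 0 by apply: Dx_0 => //; lia.
have Dqr : br (x p.+2) (e p.+1) = x p.+1 := Dx_up Hq1 HqN.
have Dqp : br (x p) (e p.+1) = 0 by apply: Dx_0 => //; lia.
have Dqq : br (x p.+1) (e p.+1) = 0 by apply: Dx_0 => //; lia.
have Hprr : T p p.+2 p.+2 = 0 by apply: red1 => //; lia.
have Hrpr : T p.+2 p p.+2 = 0 by apply: red2 => //; lia.
have [a1 [a2 R1]] := texp Xq Xq Xr (Pe Hp').
move: R1; rewrite Hg1 br0l Dpq Dpr ?(br0r, br0l, scaler0, add0r, addr0) => /esym /two2 R1.
have [b1 [b2 R2]] := texp Xq Xr Xq (Pe Hp').
move: R2; rewrite Hg2 br0l Dpq Dpr ?(br0r, br0l, scaler0, add0r, addr0) => /esym /two1 R2.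
have [c1 [c2 R3]] := texp Xr Xq Xq (Pe Hp').
move: R3; rewrite Hg3 br0l Dpq Dpr ?(br0r, br0l, scaler0, add0r, addr0) => /esym /two1 R3.
have [d1 [d2 R4]] := texp Xp Xr Xr (Pe Hq).
move: R4; rewrite Hprr br0l Dqr Dqp ?(br0r, br0l, scaler0, add0r, addr0) => /esym /two1 R4.
have [f1 [f2 R5]] := texp Xr Xp Xr (Pe Hq).
move: R5; rewrite Hrpr br0l Dqr Dqp ?(br0r, br0l, scaler0, add0r, addr0) => /esym /two1 R5.
have J := jacobi (x p.+2) Xp Xq.
rewrite (antisym (Pbr Xp Xq) Xr) R5 sgnZZ (sgn_flip R1) in J.
have B0 := solB J.
have A0 : T p p.+1 p.+2 = 0 by rewrite (sgn_flip R1) B0 scaler0.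
have C0 : T p.+2 p p.+1 = 0 by rewrite R5 B0 scaler0.
have D0 : T p p.+2 p.+1 = 0 by rewrite R4 A0 scaler0.
have E1 : T p.+1 p.+2 p = 0 by rewrite R2 D0 scaler0.
have E2 : T p.+2 p.+1 p = 0 by rewrite R3 C0 scaler0.
by do !split.
Qed.

Lemma part2 i j kk : inO i -> inO j -> inO kk -> T i j kk = 0.
Proof.
have [p Np] : exists p, p.+2 = N by exists N.-2; lia.
have [Ha Hb1 Hb2 Hb3] := Lbeta Np.
have [Hg1 Hg2 Hg3] := Lgamma Np.
have Hd := fun H => Ldelta H Np.
move: i j kk.
suff H : forall mu i j kk, (N - i + (N - j) + (N - kk) < mu)%N -> inO i -> inO j -> inO kk -> T i j kk = 0.
  by move=> i j kk Hi Hj Hk; apply: (H _ i j kk (ltnSn _)).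
elim=> [|mu IH] i j kk Hmu Hi Hj Hk; first lia.
case: (boolP [&& (i < N)%N, j != i.+1 & kk != i.+1]) => [/and3P [c1 c2 c3]|n1].
  by apply: red1 => //; first [lia | (apply: IH => //; lia)].
case: (boolP [&& (j < N)%N, i != j.+1 & kk != j.+1]) => [/and3P [c1 c2 c3]|n2].
  by apply: red2 => //; first [lia | (apply: IH => //; lia)].
case: (boolP [&& (kk < N)%N, i != kk.+1 & j != kk.+1]) => [/and3P [c1 c2 c3]|n3].
  by apply: red3 => //; first [lia | (apply: IH => //; lia)].
have Bi : (p <= i <= p.+2)%N by lia.
have Bj : (p <= j <= p.+2)%N by lia.
have Bk : (p <= kk <= p.+2)%N by lia.
have Di : i = p \/ i = p.+1 \/ i = p.+2 by lia.
have Dj : j = p \/ j = p.+1 \/ j = p.+2 by lia.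
have Dk : kk = p \/ kk = p.+1 \/ kk = p.+2 by lia.
case: Di => [Ei|[Ei|Ei]]; case: Dj => [Ej|[Ej|Ej]]; case: Dk => [Ek|[Ek|Ek]]; rewrite Ei Ej Ek;
first [ exact: Ha | exact: Hb1 | exact: Hb2 | exact: Hb3 | exact: Hg1 | exact: Hg2 | exact: Hg3
      | (have Hp1 : (1 <= p)%N by lia); case: (Hd Hp1) => d1 [d2 [d3 [d4 [d5 d6]]]];
        first [exact: d1 | exact: d2 | exact: d3 | exact: d4 | exact: d5 | exact: d6 | (exfalso; lia)]
      | (exfalso; lia) ].
Qed.

Lemma part3 i j kk l : inO i -> inO j -> inO kk -> inO l ->
  br (br (x i) (x j)) (br (x kk) (x l)) = 0.
Proof.
move=> Hi Hj Hk Hl.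
by apply: (comm_l (Px Hi) (Px Hj)); apply: part2.
Qed.

End Pf.

Unset Implicit Arguments.

Theorem lemma4p3 (k : fieldType) (V : lmodType k) (br : V -> V -> V)
    (P : bool -> V -> Prop) (m n : nat) (e h f : nat -> V) :
  (2%:R : k) != 0 -> (3%:R : k) != 0 ->
  (1 <= m)%N -> (1 <= n)%N ->
  is_lie_superalgebra br P ->
  km_relations br P m n e h f ->
  [/\ (forall i j kk l, inOmega m n i -> inOmega m n j -> inOmega m n kk ->
         inOmega m n l -> (j <= i)%N -> (l <= kk)%N -> lex_ge i j kk l ->
         (kk < m + n)%N ->
         br (eij br e i j) (eij br e kk l) = (if j.-1 == kk then eij br e i l else 0)),
      (forall i j kk, inOmega m n i -> inOmega m n j -> inOmega m n kk ->
         br (eij br e (m + n) i) (br (eij br e (m + n) j) (eij br e (m + n) kk)) = 0) &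
      (forall i j kk l, inOmega m n i -> inOmega m n j -> inOmega m n kk ->
         inOmega m n l ->
         br (br (eij br e (m + n) i) (eij br e (m + n) j))
            (br (eij br e (m + n) kk) (eij br e (m + n) l)) = 0)].
Proof.
move=> H2 H3 Hm Hn HL HK.
split.
- move=> i j kk l Hi Hj Hk Hl Hji Hlk Hlex HkN.
  exact: (part1 H2 H3 Hm Hn HL HK Hi Hj Hk Hl Hji Hlk Hlex HkN).
- move=> i j kk Hi Hj Hk.
  exact: (part2 H2 H3 Hm Hn HL HK Hi Hj Hk).
- move=> i j kk l Hi Hj Hk Hl.
  exact: (part3 H2 H3 Hm Hn HL HK Hi Hj Hk Hl).
Qed.
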